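(* Assume $\chi$ is weakly generic, let $\sigma=\sigma_{a,b}$ be a Serre weight with $\mathcal{S}(\chi_1,\chi_2,\sigma)\neq\varnothing$, let $(J,x)$ be its maximal element, and let $s,t,r,\mathcal{I}_\tau$ be as in the context. Then for every $\tau\in\Sigma$: $t_\tau\in\mathcal{I}_\tau$ if and only if $t_\tau<r_\tau$.
   Context: Let $p$ be a prime, $K/\mathbf{Q}_p$ finite with residue field $k$, residue degree $f$, ramification index $e$; $I_K$ inertia. Fix $\varpi\in\overline{K}$ with $\varpi^{p^f-1}$ a uniformiser; $\omega\colon G_K\to k^\times$ sends $g$ to the reduction of $g(\varpi)/\varpi$. $\Sigma=\mathrm{Hom}_{\mathbf{F}_p}(k,\overline{\mathbf{F}}_p)$, $\varphi(x)=x^p$, $\omega_\tau=\tau\circ\omega$, $\Omega_{\tau,a}=\sum_{i=0}^{f-1}p^ia_{\tau\circ\varphi^i}$. $\chi_1,\chi_2\colon G_K\to\overline{\mathbf{F}}_p^\times$ continuous, $\chi=\chi_1\chi_2^{-1}=\psi\prod_\tau\omega_\tau^{n_\tau}$, $\psi$ unramified, $n_\tau\in[1,p]$, some $n_\tau<p$. Weakly generic: $n_\tau\in[e,p-e]$ for all $\tau$. Serre weight $\sigma_{a,b}=\bigotimes_\tau(\det^{b_\tau}\otimes\mathrm{Sym}^{a_\tau-b_\tau}k^2)\otimes_{k,\tau}\overline{\mathbf{F}}_p$, $a_\tau-b_\tau\in[0,p-1]$; $r_\tau=a_\tau-b_\tau+1$. $\mathcal{S}(\chi_1,\chi_2,\sigma)$: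 pairs $(J,x)$, $J\subseteq\Sigma$, $x_\tau\in[0,e-1]$, with $\chi_1|_{I_K}=\prod_{\tau\in J}\omega_\tau^{a_\tau+1+x_\tau}\prod_{\tau\notin J}\omega_\tau^{b_\tau+x_\tau}$ and $\chi_2|_{I_K}=\prod_{\tau\notin J}\omega_\tau^{a_\tau+e-x_\tau}\prod_{\tau\in J}\omega_\tau^{b_\tau+e-1-x_\tau}$. $s=s(J,x)$: $s_\tau=r_\tau+x_\tau$ if $\tau\in J$, $s_\tau=x_\tau$ if $\tau\notin J$. Order: $(J,x)\preceq(J',x')$ iff $\Omega_{\tau,s(J',x')-s(J,x)}\in(p^f-1)\mathbf{Z}_{\ge0}$ for all $\tau$; a non-empty $\mathcal{S}$ has a unique maximal element. For the maximal $(J,x)$: $s=s(J,x)$, $t_\tau=a_\tau-b_\tau+e-s_\tau$, and $\mathcal{I}_\tau=[0,s_\tau-1]$ if $\tau\notin J$, $\mathcal{I}_\tau=\{t_\tau\}\cup[r_\tau,s_\tau-1]$ if $\tau\in J$ (integer intervals, empty if the upper end is below the lower end). *)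

(* Defs.v *)
From mathcomp Require Import all_boot all_order all_algebra.
Set Implicit Arguments. Unset Strict Implicit. Unset Printing Implicit Defensive.
Import Order.TTheory GRing.Theory Num.Theory.
Local Open Scope ring_scope.

(* Sigma = Hom(k, Fpbar) is identified with 'I_f via i |-> tau_0 o phi^i.
   Then tau_j o phi^i = tau_{(j+i) mod f}. *)
Lemma ord_pos (f : nat) (j : 'I_f) : (0 < f)%N.
Proof. exact: leq_ltn_trans (leq0n j) (ltn_ord j). Qed.

Definition tau_phi (f : nat) (j : 'I_f) (i : nat) : 'I_f :=
  Ordinal (ltn_pmod (j + i) (ord_pos j)).

Definition Omega (p f : nat) (j : 'I_f) (a : 'I_f -> int) : int :=
  \sum_(i < f) (p ^ i)%:Z * a (tau_phi j i).

Definition qm1 (p f : nat) : int := (p ^ f)%:Z - 1.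

(* The inertia characters prod_tau omega_tau^{c_tau} and prod_tau omega_tau^{d_tau}
   coincide (omega_{tau o phi} = omega_tau^p, omega_tau|_{I_K} of order p^f-1). *)
Definition charI_eq (p f : nat) (c d : 'I_f -> int) : Prop :=
  forall j : 'I_f, (Omega p j c == Omega p j d %[mod qm1 p f])%Z.

Definition rr (f : nat) (a b : 'I_f -> int) (tau : 'I_f) : int := a tau - b tau + 1.

(* (J, x) in S(chi1, chi2, sigma_{a,b}), where chi_i|_{I_K} = prod omega_tau^{k_i tau} *)
Definition inS (p f e : nat) (a b k1 k2 : 'I_f -> int)
    (J : {set 'I_f}) (x : 'I_f -> nat) : Prop :=
  [/\ forall tau, (x tau < e)%N,
      charI_eq p (fun tau => if tau \in J then a tau + 1 + (x tau)%:Z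
                             else b tau + (x tau)%:Z) k1
    & charI_eq p (fun tau => if tau \in J then b tau + e%:Z - 1 - (x tau)%:Z
                             else a tau + e%:Z - (x tau)%:Z) k2].

Definition sJx (f : nat) (a b : 'I_f -> int) (J : {set 'I_f}) (x : 'I_f -> nat)
    (tau : 'I_f) : int :=
  if tau \in J then rr a b tau + (x tau)%:Z else (x tau)%:Z.

Definition preceqS (p f : nat) (a b : 'I_f -> int)
    (J : {set 'I_f}) (x : 'I_f -> nat) (J' : {set 'I_f}) (x' : 'I_f -> nat) : Prop :=
  forall tau : 'I_f,
    let d := Omega p tau (fun t => sJx a b J' x' t - sJx a b J x t) in
    0 <= d /\ (qm1 p f %| d)%Z.

Definition tt (f e : nat) (a b : 'I_f -> int) (J : {set 'I_f}) (x : 'I_f -> nat)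
    (tau : 'I_f) : int :=
  a tau - b tau + e%:Z - sJx a b J x tau.

Definition inI (f e : nat) (a b : 'I_f -> int) (J : {set 'I_f}) (x : 'I_f -> nat)
    (tau : 'I_f) (y : int) : bool :=
  let s := sJx a b J x tau in
  if tau \in J then (y == tt e a b J x tau) || ((rr a b tau <= y) && (y <= s - 1))
  else (0 <= y) && (y <= s - 1).

(* Main.v *)
Require Import Defs.
From mathcomp Require Import all_boot all_order all_algebra.
From mathcomp Require Import zify ring lra.
Import Order.TTheory GRing.Theory Num.Theory.
Local Open Scope ring_scope.

Lemma tphiA f (j : 'I_f) k i : tau_phi (tau_phi j k) i = tau_phi j (k + i).
Proof. apply: val_inj; rewrite /= modnDml addnA. by []. Qed.

Lemma tphi0 f (j : 'I_f) : tau_phi j 0 = j.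
Proof. apply: val_inj; by rewrite /= addn0 modn_small. Qed.

Lemma tphif f (j : 'I_f) : tau_phi j f = j.
Proof. apply: val_inj; by rewrite /= modnDr modn_small. Qed.

Lemma tphi_eq f (j : 'I_f) i k : (i < f)%N -> (k < f)%N ->
  (tau_phi j i == tau_phi j k) = (i == k).
Proof.
move=> hi hk; apply/eqP/eqP => [h|->//].
have := congr1 val h => /= /eqP; rewrite eqn_modDl !modn_small //. by move/eqP.
Qed.

Lemma Omega_ext p f (j : 'I_f) c d : (forall t, c t = d t) -> Omega p j c = Omega p j d.
Proof. move=> h; apply: eq_bigr => i _; by rewrite h. Qed.

Lemma Omega_add p f (j : 'I_f) c d :
  Omega p j (fun t => c t + d t) = Omega p j c + Omega p j d.
Proof. rewrite /Omega -big_split; apply: eq_bigr => i _ /=; by rewrite mulrDr. Qed.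

Lemma Omega_opp p f (j : 'I_f) c :
  Omega p j (fun t => - c t) = - Omega p j c.
Proof. rewrite /Omega -sumrN; apply: eq_bigr => i _ /=; by rewrite mulrN. Qed.

Lemma Omega_sub p f (j : 'I_f) c d :
  Omega p j (fun t => c t - d t) = Omega p j c - Omega p j d.
Proof. by rewrite Omega_add Omega_opp. Qed.

Lemma Omega_nat p f (j : 'I_f) c :
  Omega p j c = \sum_(0 <= i < f) (p ^ i)%:Z * c (tau_phi j i).
Proof. by rewrite big_mkord. Qed.

Lemma sum_shift (F : nat -> int) n :
  \sum_(0 <= i < n) F i.+1 = \sum_(0 <= i < n) F i + F n - F 0.
Proof.
have h1 := big_nat_recl n 0 F (leq0n n).
have h2 := big_nat_recr n 0 F (leq0n n).
rewrite /= in h1 h2.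
have : F 0 + \sum_(0 <= i < n) F i.+1 = \sum_(0 <= i < n) F i + F n by rewrite -h1 -h2.
move=> h; rewrite -h; ring.
Qed.

Lemma Omega_shift p f (j : 'I_f) c :
  Omega p j c + qm1 p f * c j = p%:Z * Omega p (tau_phi j 1) c.
Proof.
rewrite !Omega_nat big_distrr /=.
have -> : \sum_(0 <= i < f) p%:Z * ((p ^ i)%:Z * c (tau_phi (tau_phi j 1) i))
   = \sum_(0 <= i < f) (p ^ i.+1)%:Z * c (tau_phi j i.+1).
  apply: eq_bigr => i _; by rewrite tphiA add1n expnS PoszM mulrA.
rewrite (sum_shift (fun i => (p ^ i)%:Z * c (tau_phi j i))) tphif tphi0 /qm1 expn0.
ring.
Qed.

Lemma Omega_point p f (j : 'I_f) k (v : int) : (k < f)%N ->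
  Omega p j (fun t => if t == tau_phi j k then v else 0) = (p ^ k)%:Z * v.
Proof.
move=> hk.
rewrite /Omega (eq_bigr (fun i : 'I_f => if i == Ordinal hk then (p ^ i)%:Z * v else 0)).
  by rewrite -big_mkcond big_pred1_eq.
move=> i _; rewrite tphi_eq //.
have -> : (i == Ordinal hk) = ((i:nat) == k) by [].
by case: eqP => _; rewrite ?mulr0.
Qed.

Definition Ssum p f : int := \sum_(i < f) (p ^ i)%:Z.

Lemma Ssum_q p f : (0 < p)%N -> (p%:Z - 1) * Ssum p f = qm1 p f.
Proof.
move=> hp; rewrite /Ssum /qm1.
have := predn_exp p f.
rewrite -!subn1 => h.
have hpf : (1 <= p ^ f)%N by rewrite expn_gt0 hp.
have e1 : (p ^ f)%:Z - 1 = ((p ^ f - 1)%N)%:Z by rewrite subzn.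
have e2 : p%:Z - 1 = ((p-1)%N)%:Z by rewrite subzn.
rewrite e1 e2 h PoszM.
congr (_ * _).
by rewrite -(big_morph Posz PoszD (erefl 0%:Z)).
Qed.

Lemma Omega_bounds p f (j : 'I_f) c (lo hi : int) :
  (forall t, lo <= c t <= hi) ->
  lo * Ssum p f <= Omega p j c <= hi * Ssum p f.
Proof.
move=> h; rewrite /Ssum !big_distrr /=; apply/andP; split; apply: ler_sum => i _;
 case/andP: (h (tau_phi j i)) => h1 h2.
  by rewrite [lo * _]mulrC; apply: ler_wpM2l.
by rewrite [hi * _]mulrC; apply: ler_wpM2l.
Qed.

Lemma dvd_step p f (j : 'I_f) c :
  (qm1 p f %| Omega p (tau_phi j 1) c)%Z -> (qm1 p f %| Omega p j c)%Z.
Proof.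
move=> h.
have -> : Omega p j c = p%:Z * Omega p (tau_phi j 1) c - qm1 p f * c j.
  by rewrite -Omega_shift; ring.
by apply: rpredB; [apply: dvdz_mull | apply: dvdz_mulr; apply: dvdzz].
Qed.

Lemma dvd_all p f (tau : 'I_f) c :
  (qm1 p f %| Omega p tau c)%Z -> forall j, (qm1 p f %| Omega p j c)%Z.
Proof.
move=> h.
have P : forall i, (qm1 p f %| Omega p (tau_phi tau (f - i)) c)%Z.
  elim=> [|i IH]; first by rewrite subn0 tphif.
  case: (ltnP i f) => hi.
    apply: dvd_step; rewrite tphiA addn1 subnSK //.
  by have -> : (f - i.+1 = f - i)%N by lia.
move=> j.
have -> : j = tau_phi tau (f - (f - (j + (f - tau)) %% f)).
  apply: val_inj => /=.
  have hf := ord_pos j.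
  rewrite subKn; last by apply: ltnW; rewrite ltn_mod.
  rewrite modnDmr.
  have -> : (tau + (j + (f - tau)) = j + f)%N by have := ltn_ord tau; lia.
  by rewrite modnDr modn_small.
exact: P.
Qed.

Theorem proposition5p10 (p f e : nat) (hp : prime p) (hf : (0 < f)%N) (he : (0 < e)%N)
    (k1 k2 n a b : 'I_f -> int)
    (* chi|_{I_K} = (chi1 chi2^{-1})|_{I_K} = prod_tau omega_tau^{n_tau} *)
    (hchi : charI_eq p (fun tau => k1 tau - k2 tau) n)
    (hn : forall tau, 1 <= n tau <= p%:Z)
    (hnp : exists tau, n tau < p%:Z)
    (* weakly generic *)
    (hgen : forall tau, e%:Z <= n tau <= p%:Z - e%:Z)
    (* Serre weight sigma_{a,b} *)
    (hab : forall tau, 0 <= a tau - b tau <= p%:Z - 1)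
    (J : {set 'I_f}) (x : 'I_f -> nat)
    (hS : inS p e a b k1 k2 J x)
    (hmax : forall (J' : {set 'I_f}) (x' : 'I_f -> nat),
        inS p e a b k1 k2 J' x' -> preceqS p a b J' x' J x) :
  forall tau : 'I_f,
    inI e a b J x tau (tt e a b J x tau) = (tt e a b J x tau < rr a b tau).
Proof.
have hp2 : (2 <= p)%N := prime_gt1 hp.
have hq : 0 < qm1 p f.
  have : (1 < p ^ f)%N.
    rewrite -(prednK hf) expnS; apply: (leq_trans hp2).
    by rewrite leq_pmulr // expn_gt0 (ltnW hp2).
  by rewrite /qm1 subr_gt0 -(ltz_nat 1).
have F1 : forall (J0 : {set 'I_f}) (x0 : 'I_f -> nat) σ, (if σ \in J0 then a σ + 1 + (x0 σ)%:Z else b σ + (x0 σ)%:Z)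
    = b σ + sJx a b J0 x0 σ.
  by move=> J0 x0 σ; rewrite /sJx /rr; case: ifP => _; ring.
have F2 : forall (J0 : {set 'I_f}) (x0 : 'I_f -> nat) σ, (if σ \in J0 then b σ + e%:Z - 1 - (x0 σ)%:Z
                           else a σ + e%:Z - (x0 σ)%:Z)
    = a σ + e%:Z - sJx a b J0 x0 σ.
  by move=> J0 x0 σ; rewrite /sJx /rr; case: ifP => _; ring.
case: (hS) => hx hc1 hc2.
set s := sJx a b J x.
set r := rr a b.
pose d σ := 2 * s σ - (r σ - 1) - e%:Z - n σ.
have hd : forall j, (qm1 p f %| Omega p j d)%Z.
  move=> j.
  have := hc1 j; have := hc2 j; have := hchi j; rewrite !eqz_mod_dvd => h3 h2 h1.
  rewrite (@Omega_ext p f j _ _ (F1 J x)) in h1.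
  rewrite (@Omega_ext p f j _ _ (F2 J x)) in h2.
  have -> : Omega p j d = (Omega p j (fun t => b t + s t) - Omega p j k1)
     - (Omega p j (fun t => a t + e%:Z - s t) - Omega p j k2)
     + (Omega p j (fun t => k1 t - k2 t) - Omega p j n).
    rewrite /Omega -!sumrB -big_split /=; apply: eq_bigr => i _.
    rewrite /d /r /rr; ring.
  by apply: rpredD; [apply: rpredB|].
pose m σ := (Omega p σ d %/ qm1 p f)%Z.
have hm : forall σ, Omega p σ d = m σ * qm1 p f := fun σ => esym (divzK (hd σ)).
have hrel : forall σ, d σ = p%:Z * m (tau_phi σ 1) - m σ.
  move=> σ; have := @Omega_shift p f σ d; rewrite !hm => h.
  have : (d σ - (p%:Z * m (tau_phi σ 1) - m σ)) * qm1 p f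
       = (m σ * qm1 p f + qm1 p f * d σ) - p%:Z * (m (tau_phi σ 1) * qm1 p f) by ring.
  rewrite h subrr => /eqP; rewrite mulf_eq0 (gt_eqF hq) orbF subr_eq0.
  by move/eqP.
have hdb : forall σ, 1 - 2 * p%:Z <= d σ <= p%:Z - 1.
  move=> σ; rewrite /d /s /r /sJx /rr; have := hab σ; have := hgen σ; have := hx σ.
  by case: ifP => _; lia.
have core : forall τ, r τ <= s τ -> s τ <= e%:Z - 1 -> False.
  move=> τ h1 h2.
  have hr1 : 1 <= r τ by have := hab τ; rewrite /r /rr; lia.
  have hp4 : 4 <= p%:Z by have := hgen τ; lia.
  have hmb : forall σ, -2 <= m σ <= 1.
    move=> σ.
    have := @Omega_bounds p f σ d _ _ hdb; rewrite hm => /andP [hlo hhi].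
    have hSq := @Ssum_q p f (ltnW hp2).
    have hup : (m σ - 1) * qm1 p f <= 0.
      by rewrite mulrBl mul1r subr_le0; rewrite hSq in hhi.
    rewrite pmulr_lle0 // in hup.
    have hlo' : (p%:Z - 1) * ((1 - 2 * p%:Z) * Ssum p f) <= (p%:Z - 1) * (m σ * qm1 p f).
      by apply: ler_wpM2l => //; lia.
    have : (1 - 2 * p%:Z - (p%:Z - 1) * m σ) * qm1 p f <= 0.
      move: hlo'; rewrite -hSq.
      have -> : (p%:Z - 1) * ((1 - 2 * p%:Z) * Ssum p f) = (1 - 2 * p%:Z) * ((p%:Z - 1) * Ssum p f) by ring.
      have -> : (p%:Z - 1) * (m σ * ((p%:Z - 1) * Ssum p f)) = ((p%:Z - 1) * m σ) * ((p%:Z - 1) * Ssum p f) by ring.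
      by move=> H; rewrite [X in X <= 0]mulrBl subr_le0.
    rewrite pmulr_lle0 // => hlo2.
    apply/andP; split; [nia | lia].
  have hdt : 2 - p%:Z <= d τ <= -2.
    by rewrite /d; have := hgen τ; lia.
  have hτm : tau_phi (tau_phi τ f.-1) 1 = τ by rewrite tphiA addn1 prednK // tphif.
  have r1 := hrel τ.
  have r2 := hrel (tau_phi τ f.-1); rewrite hτm in r2.
  have hmt : m τ = -2.
    have := hmb (tau_phi τ 1); have := hmb τ.
    have : m (tau_phi τ 1) = -2 \/ m (tau_phi τ 1) = -1 \/ m (tau_phi τ 1) = 0 \/ m (tau_phi τ 1) = 1.
      by have := hmb (tau_phi τ 1); lia.
    by case=> [e1|[e1|[e1|e1]]]; rewrite e1 in r1; lia.
  have hdm : d (tau_phi τ f.-1) <= 2 - 2 * p%:Z.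
    by rewrite r2 hmt; have := hmb (tau_phi τ f.-1); lia.
  have hne : tau_phi τ f.-1 != τ.
    by apply/eqP => e1; rewrite e1 in hdm; lia.
  have hnJ : tau_phi τ f.-1 \notin J.
    apply/negP => hin; move: hdm; rewrite /d /s /r /sJx hin /rr.
    by have := hab (tau_phi τ f.-1); have := hgen (tau_phi τ f.-1); lia.
  have [hx0 hrm] : x (tau_phi τ f.-1) = 0%N /\ p%:Z - 1 <= r (tau_phi τ f.-1).
    move: hdm; rewrite /d /s /r /sJx (negbTE hnJ) /rr.
    by have := hab (tau_phi τ f.-1); have := hgen (tau_phi τ f.-1); lia.
  have hrmp : r (tau_phi τ f.-1) <= p%:Z by have := hab (tau_phi τ f.-1); rewrite /r /rr; lia.
  pose δ σ := (if σ == tau_phi τ f.-1 then p%:Z else 0) - (if σ == tau_phi τ 0 then 1 else 0).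
  have hOδ : Omega p τ δ = qm1 p f.
    rewrite /δ Omega_sub !Omega_point ?prednK // expn0 mulr1 /qm1.
    by rewrite -PoszM -expnSr prednK.
  have hdδ : forall j, (qm1 p f %| Omega p j δ)%Z.
    by apply: (@dvd_all p f τ); rewrite hOδ dvdzz.
  pose J' := [set σ | if σ == tau_phi τ f.-1 then true else if σ == τ then false else σ \in J].
  pose x' σ := if σ == tau_phi τ f.-1 then `|p%:Z - r (tau_phi τ f.-1)|%N
               else if σ == τ then `|s τ - 1|%N else x σ.
  have hs' : forall σ, sJx a b J' x' σ = s σ + δ σ.
    move=> σ; rewrite /sJx /J' /x' /δ inE tphi0.
    case: (eqVneq σ (tau_phi τ f.-1)) => [->|h3].
      rewrite (negbTE hne) /s /sJx (negbTE hnJ) hx0.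
      rewrite /r in hrm hrmp *; lia.
    case: (eqVneq σ τ) => [->|h4].
      lia.
    by rewrite /s /sJx; ring.
  have hinS : inS p e a b k1 k2 J' x'.
    split.
    - move=> σ; rewrite /x'; case: eqP => _.
        have := hab τ; lia.
      case: eqP => _; last exact: hx.
      lia.
    - move=> j; rewrite eqz_mod_dvd (@Omega_ext p f j _ _ (F1 J' x')).
      have -> : Omega p j (fun t => b t + sJx a b J' x' t)
          = Omega p j (fun t => b t + s t) + Omega p j δ.
        by rewrite -Omega_add; apply: Omega_ext => t; rewrite hs'; ring.
      have := hc1 j; rewrite eqz_mod_dvd (@Omega_ext p f j _ _ (F1 J x)) => h.
      by rewrite addrAC; apply: rpredD.
    - move=> j; rewrite eqz_mod_dvd (@Omega_ext p f j _ _ (F2 J' x')).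
      have -> : Omega p j (fun t => a t + e%:Z - sJx a b J' x' t)
          = Omega p j (fun t => a t + e%:Z - s t) - Omega p j δ.
        by rewrite -Omega_sub; apply: Omega_ext => t; rewrite hs'; ring.
      have := hc2 j; rewrite eqz_mod_dvd (@Omega_ext p f j _ _ (F2 J x)) => h.
      by rewrite addrAC; apply: rpredB.
  have := hmax J' x' hinS τ => /= [[h0 _]].
  rewrite (@Omega_ext p f τ _ (fun t => - δ t)) in h0; last first.
    by move=> t; rewrite hs' /s; ring.
  by rewrite Omega_opp hOδ in h0; lia.
move=> τ; rewrite /inI /tt.
case: ifP => hin.
  rewrite eqxx /=; case: ltrP => // hge; exfalso.
  apply: (core τ); rewrite /s /sJx hin /r /rr in hge *; lia.
apply/idP/idP => [/andP [h1 h2]|h]; exfalso.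
  apply: (core τ); rewrite /s /sJx hin /r /rr in h1 h2 *; have := hx τ; lia.
move: h; rewrite /s /sJx hin /r /rr; have := hx τ; lia.
Qed.
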